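(* Let $D, n \ge 1$, let $t_1, \dots, t_D$ be equally spaced real numbers, and let $\theta = (\theta_1, \theta_2, \theta_3) \in \mathbb{R}^3$ with $l = e^{\theta_1}$, $a^2 = e^{2\theta_2}$, $\sigma^2 = e^{2\theta_3}$. Let $A$ be the $D \times D$ matrix $A_{rs} = a^2 \exp\left(-(t_r - t_s)^2 / l\right)$, let $S$ be the $D\times D$ matrix $S_{rs} = (t_r - t_s)^2 / l$, let $J_n$ be the $n\times n$ all-ones matrix, and let $\hat{C} = \sigma^2 I_{nD} + J_n \otimes A$. Let $Z = (I_D + \sigma^{-2} n A)^{-1}$. For a data vector $X(\tau) \in \mathbb{R}^{nD}$ define $$\log p(X \mid \tau, \theta) = -\tfrac{1}{2} X(\tau)^T \hat{C}^{-1} X(\tau) - \tfrac{1}{2}\log\det \hat{C} - \tfrac{nD}{2}\log 2\pi .$$ Then $$\frac{\partial}{\partial\theta_1}\log p(X \mid \tau, \theta) = \frac{1}{2} X(\tau)^T \left(\sigma^{-4} J_n \otimes \big(Z (A\odot S) Z\big)\right) X(\tau) - \frac{1}{2}\operatorname{tr}\!\left(\hat{C}^{-1} \frac{\partial \hat{C}}{\partial \theta_1}\right),$$ where $$\operatorname{tr}\!\left(\hat{C}^{-1} \frac{\partial \hat{C}}{\partial \theta_1}\right) = \sigma^{-2} n \sum_i (A\odot S)_{ii} - \sigma^{-2} n \sum_{i,j} \left\{(I_D - Z) \odot (A\odot S)\right\}_{ij}.$$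
   Context: $\otimes$ is the Kronecker product and $\odot$ the Hadamard (entrywise) product. $X(\tau)$ is the concatenation $(x_1(t_1),\dots,x_1(t_D),\dots,x_n(t_1),\dots,x_n(t_D))$ of $n$ observation vectors of length $D$. The derivative is taken with $X(\tau)$ and $t_1,\dots,t_D$ fixed, with $A$, $\hat C$, $Z$ depending on $\theta$ through $l, a^2, \sigma^2$ as defined. *)

(* Defs.v *)
From HB Require Import structures.
From mathcomp Require Import all_boot all_order all_algebra.
From mathcomp Require Import all_classical all_reals all_analysis.
From mathcomp Require Import mxtens.
Unset Printing Implicit Defensive.
Import Order.TTheory GRing.Theory Num.Theory.
Local Open Scope ring_scope.

Section GPDefs.
Context {R : realType}.

Definition hadamard {m p : nat} (A B : 'M[R]_(m, p)) : 'M[R]_(m, p) :=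
  \matrix_(i, j) (A i j * B i j).

(* Kronecker product: tensmx from mathcomp-real-closed (mxtens), with the
   row index (i, r) of A *t B being i * D + r, matching the ordering of X(tau). *)
Definition kron {m p q s : nat} (A : 'M[R]_(m, p)) (B : 'M[R]_(q, s)) :=
  tensmx A B.

Definition len (th1 : R) : R := expR th1.
Definition asq (th2 : R) : R := expR (2 * th2).
Definition ssq (th3 : R) : R := expR (2 * th3).

Definition Amx {D : nat} (t : 'I_D -> R) (th1 th2 : R) : 'M[R]_D :=
  \matrix_(r, s) (asq th2 * expR (- ((t r - t s) ^+ 2 / len th1))).

Definition Smx {D : nat} (t : 'I_D -> R) (th1 : R) : 'M[R]_D :=
  \matrix_(r, s) ((t r - t s) ^+ 2 / len th1).

Definition Jmx (n : nat) : 'M[R]_n := const_mx 1.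

Definition Chat (n : nat) {D : nat} (t : 'I_D -> R) (th1 th2 th3 : R)
  : 'M[R]_(n * D) :=
  ssq th3 *: 1%:M + kron (Jmx n) (Amx t th1 th2).

Definition Zmx (n : nat) {D : nat} (t : 'I_D -> R) (th1 th2 th3 : R) : 'M[R]_D :=
  invmx (1%:M + ((ssq th3)^-1 * n%:R) *: Amx t th1 th2).

Definition logp (n : nat) {D : nat} (t : 'I_D -> R) (th1 th2 th3 : R)
  (X : 'cV[R]_(n * D)) : R :=
  - (1/2) * (X^T *m invmx (Chat n t th1 th2 th3) *m X) 0 0
  - (1/2) * ln (\det (Chat n t th1 th2 th3))
  - ((n * D)%:R / 2) * ln (2 * pi).

Definition dChat (n : nat) {D : nat} (t : 'I_D -> R) (th1 th2 th3 : R)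
  : 'M[R]_(n * D) :=
  \matrix_(i, j) derive1 (fun u => Chat n t u th2 th3 i j) th1.

End GPDefs.

(* Main.v *)
Require Import Defs.
From HB Require Import structures.
From mathcomp Require Import all_boot all_order all_algebra.
From mathcomp Require Import all_classical all_reals all_analysis.
From mathcomp Require Import mxtens ring lra perm.
Import Order.TTheory GRing.Theory Num.Theory numFieldNormedType.Exports.
Local Open Scope ring_scope. Local Open Scope classical_set_scope.

Section Aux.
Variable R : realType.

Lemma cvg_bigsum (I : Type) (s : seq I) (f : I -> nat -> R) (l : I -> R) :
  (forall i, f i n @[n --> \oo] --> l i) ->
  (\sum_(i <- s) f i n) @[n --> \oo] --> \sum_(i <- s) l i.
Proof.
move=> h; elim: s => [|a s IH].
  rewrite big_nil; have -> : (fun n => \sum_(i <- [::]) f i n) = (fun=> 0) .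
    by apply/funext => n; rewrite big_nil.
  exact: cvg_cst.
have -> : (fun n => \sum_(i <- a :: s) f i n) = f a + (fun n => \sum_(i <- s) f i n).
  by apply/funext => n; rewrite big_cons.
rewrite big_cons; exact: cvgD.
Qed.

Lemma gauss_psd D (t : 'I_D -> R) (c : R) (w : 'I_D -> R) : 0 <= c ->
  0 <= \sum_r \sum_s w r * w s * expR (c * (t r * t s)).
Proof.
move=> c0.
set u := fun N => \sum_r \sum_s w r * w s * series (exp_coeff (c * (t r * t s))) N.
have cu : u N @[N --> \oo] --> \sum_r \sum_s w r * w s * expR (c * (t r * t s)).
  rewrite /u; apply: cvg_bigsum => r; apply: cvg_bigsum => s.
  apply: cvgMl_tmp; exact: is_cvg_series_exp_coeff.
rewrite -(cvg_lim _ cu) //; apply: (limr_ge (cvgP _ cu)); apply: nearW => N.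
rewrite /u /series /=.
have -> : \sum_r \sum_s w r * w s * \sum_(0 <= k < N) exp_coeff (c * (t r * t s)) k
   = \sum_(0 <= k < N) (c ^+ k / k`!%:R) * ((\sum_r w r * t r ^+ k) * (\sum_s w s * t s ^+ k)).
  symmetry.
  under eq_bigr => k _ do rewrite mulr_suml mulr_sumr.
  rewrite exchange_big /=; apply: eq_bigr => r _.
  under eq_bigr => k _ do rewrite mulr_sumr mulr_sumr.
  rewrite exchange_big /=.  apply: eq_bigr => s _.
  rewrite mulr_sumr; apply: eq_bigr => k _.
  rewrite /exp_coeff /= !exprMn; ring.
apply: sumr_ge0 => k _; apply: mulr_ge0.
  by apply: divr_ge0; [exact: exprn_ge0 | exact: ler0n].
by rewrite -expr2; exact: sqr_ge0.
Qed.

Lemma qf_sum N (v : 'rV[R]_N) (M : 'M[R]_N) :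
  (v *m M *m v^T) 0 0 = \sum_a \sum_b v 0 a * M a b * v 0 b.
Proof.
rewrite mxE exchange_big /=; apply: eq_bigr => a _.
rewrite !mxE mulr_suml; apply: eq_bigr => b _; by [].
Qed.

Lemma pd_unit N (K : 'M[R]_N) (s : R) : 0 < s ->
  (forall v : 'rV_N, 0 <= (v *m K *m v^T) 0 0) -> (s *: 1%:M + K) \in unitmx.
Proof.
move=> s0 hK; rewrite unitmxE unitfE; apply/negP => /det0P [v vn0 vM].
have : (v *m (s *: 1%:M + K) *m v^T) 0 0 = 0 by rewrite vM mul0mx mxE.
rewrite mulmxDr mulmxDl mxE -scalemxAr mulmx1 -scalemxAl mxE.
have [a va] : exists a, v 0 a != 0.
  apply/existsP; apply: contraR vn0; rewrite negb_exists => /forallP h.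
  apply/eqP/matrixP => i j; rewrite (ord1 i) mxE; exact/eqP/negbNE/h.
have pos : 0 < (v *m v^T) 0 0.
  rewrite mxE (bigD1 a) //= !mxE.
  have h1 : 0 < v 0 a * v 0 a by rewrite -expr2 lt_neqAle sqr_ge0 andbT eq_sym sqrf_eq0.
  have h2 : 0 <= \sum_(i | i != a) v 0 i * v^T i 0.
    by apply: sumr_ge0 => i _; rewrite mxE -expr2 sqr_ge0.
  lra.
have := hK v; have := mulr_gt0 s0 pos; lra.
Qed.

Lemma big_mxtens m p (F : 'I_(m * p) -> R) :
  \sum_k F k = \sum_(i < m) \sum_(j < p) F (mxtens_index (i, j)).
Proof.
rewrite (reindex (@mxtens_index m p)) /=; last first.
  by exists (@mxtens_unindex m p) => x _; [apply: mxtens_indexK | apply: mxtens_unindexK].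
by rewrite pair_big /=; apply: eq_bigr => -[i j].
Qed.

Lemma kronE m p q s (A : 'M[R]_(m, p)) (B : 'M[R]_(q, s)) i j k l :
  kron A B (mxtens_index (i, j)) (mxtens_index (k, l)) = A i k * B j l.
Proof. by rewrite /kron tensmxE. Qed.

Lemma kronDr m p q s (A : 'M[R]_(m, p)) (B C : 'M[R]_(q, s)) :
  kron A (B + C) = kron A B + kron A C.
Proof. by apply/matrixP => i j; rewrite !mxE mulrDr. Qed.

Lemma kronZr m p q s (A : 'M[R]_(m, p)) (B : 'M[R]_(q, s)) a :
  kron A (a *: B) = a *: kron A B.
Proof. by apply/matrixP => i j; rewrite !mxE mulrCA. Qed.

Lemma kronZl m p q s (A : 'M[R]_(m, p)) (B : 'M[R]_(q, s)) a :
  kron (a *: A) B = a *: kron A B.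
Proof. by apply/matrixP => i j; rewrite !mxE mulrA. Qed.

Lemma kronNr m p q s (A : 'M[R]_(m, p)) (B : 'M[R]_(q, s)) :
  kron A (- B) = - kron A B.
Proof. by apply/matrixP => i j; rewrite !mxE mulrN. Qed.

Lemma kron0r m p q s (A : 'M[R]_(m, p)) :
  kron A (0 : 'M[R]_(q, s)) = 0.
Proof. by apply/matrixP => i j; rewrite !mxE mulr0. Qed.

Lemma kron11 m p : kron (1%:M : 'M[R]_m) (1%:M : 'M[R]_p) = 1%:M.
Proof.
apply/matrixP => i j.
case: (mxtens_indexP i) => i1 i2; case: (mxtens_indexP j) => j1 j2.
rewrite kronE !mxE (can_eq (@mxtens_indexK m p)) xpair_eqE.
by case: (i1 == j1); case: (i2 == j2); rewrite ?mulr1 ?mulr0.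
Qed.

Lemma kron_mul m p q s r u (A : 'M[R]_(m, p)) (B : 'M[R]_(q, s))
  (C : 'M[R]_(p, r)) (E : 'M[R]_(s, u)) :
  kron A B *m kron C E = kron (A *m C) (B *m E).
Proof. exact: tensmx_mul. Qed.

Lemma JJ n : Jmx n *m Jmx n = n%:R *: Jmx n :> 'M[R]_n.
Proof.
apply/matrixP => i j; rewrite !mxE.
under eq_bigr do rewrite !mxE mulr1.
by rewrite sumr_const card_ord mulr1.
Qed.

Lemma tr_kron m p (A : 'M[R]_m) (B : 'M[R]_p) : \tr (kron A B) = \tr A * \tr B.
Proof.
rewrite /mxtrace big_mxtens mulr_suml; apply: eq_bigr => i _.
rewrite mulr_sumr; apply: eq_bigr => j _; by rewrite kronE.
Qed.

Lemma kron_form n D (P Q P' Q' : 'M[R]_D) :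
  (kron 1%:M P + kron (Jmx n) Q) *m (kron 1%:M P' + kron (Jmx n) Q')
  = kron 1%:M (P *m P') + kron (Jmx n) (P *m Q' + Q *m P' + n%:R *: (Q *m Q')).
Proof.
rewrite mulmxDl !mulmxDr !kron_mul !mul1mx !mulmx1 JJ kronZl -kronZr !kronDr.
by rewrite !addrA; congr (_ + _); rewrite -!addrA; congr (_ + _); rewrite addrC.
Qed.

Lemma kron_psd n D (K : 'M[R]_D) :
  (forall w : 'rV_D, 0 <= (w *m K *m w^T) 0 0) ->
  forall v : 'rV_(n * D), 0 <= (v *m kron (Jmx n) K *m v^T) 0 0.
Proof.
move=> hK v.
pose w : 'rV_D := \row_j \sum_i v 0 (mxtens_index (i, j)).
suff -> : (v *m kron (Jmx n) K *m v^T) 0 0 = (w *m K *m w^T) 0 0 by apply: hK.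
rewrite !qf_sum big_mxtens exchange_big /=; apply: eq_bigr => r _.
under [RHS]eq_bigr => b _ do rewrite [w 0 r]mxE !mulr_suml.
rewrite [RHS]exchange_big /=; apply: eq_bigr => i _.
rewrite big_mxtens exchange_big /=; apply: eq_bigr => r' _.
rewrite [w 0 r']mxE mulr_sumr; apply: eq_bigr => i' _.
by rewrite kronE mxE mul1r.
Qed.

Lemma A_psd D (t : 'I_D -> R) u th2 :
  forall w : 'rV_D, 0 <= (w *m Amx t u th2 *m w^T) 0 0.
Proof.
move=> w; rewrite qf_sum.
set L := len u.
have L0 : 0 < L by rewrite /L /len expR_gt0.
pose w' a := w 0 a * expR (- (t a ^+ 2 / L)).
have -> : \sum_a \sum_b w 0 a * Amx t u th2 a b * w 0 b =
  asq th2 * \sum_a \sum_b w' a * w' b * expR ((2 / L) * (t a * t b)).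
  rewrite mulr_sumr; apply: eq_bigr => a _.
  rewrite mulr_sumr; apply: eq_bigr => b _.
  rewrite mxE -/L.
  have -> : - ((t a - t b) ^+ 2 / L) =
     - (t a ^+ 2 / L) + - (t b ^+ 2 / L) + (2 / L) * (t a * t b) by ring.
  rewrite !expRD /w'; ring.
apply: mulr_ge0; first by rewrite /asq expR_ge0.
apply: gauss_psd; apply: divr_ge0; [by [] | exact: ltW].
Qed.

Lemma is_derive_ext (f g : R -> R) (x : R) (d : R) :
  (forall u, f u = g u) -> is_derive x 1 f d -> is_derive x 1 g d.
Proof. by move=> e; have -> : g = f by apply/funext => u; rewrite e. Qed.

Lemma is_derive_bigsum (I : Type) (r : seq I) (f : I -> R -> R) (f' : I -> R) (x : R) :
  (forall i, is_derive x 1 (f i) (f' i)) ->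
  is_derive x 1 (fun u => \sum_(i <- r) f i u) (\sum_(i <- r) f' i).
Proof.
move=> h; elim: r => [|a r IH].
  apply: (@is_derive_ext (cst 0)); first by move=> u; rewrite big_nil.
  rewrite big_nil; exact: is_derive_cst.
apply: (@is_derive_ext (f a + (fun u => \sum_(i <- r) f i u))).
  by move=> u; rewrite big_cons.
rewrite big_cons; exact: is_deriveD.
Qed.

Lemma is_derive_prod (I : eqType) (r : seq I) (f : I -> R -> R) (f' : I -> R) (x : R) :
  uniq r -> (forall i, is_derive x 1 (f i) (f' i)) ->
  is_derive x 1 (fun u => \prod_(k <- r) f k u)
    (\sum_(i <- r) f' i * \prod_(k <- r | k != i) f k x).
Proof.
move=> + h; elim: r => [|a r IH] /=.
  move=> _; apply: (@is_derive_ext (cst 1)); first by move=> u; rewrite big_nil.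
  rewrite big_nil; exact: is_derive_cst.
move=> /andP [anr ur].
apply: (@is_derive_ext (f a * (fun u => \prod_(k <- r) f k u))).
  by move=> u; rewrite big_cons.
apply: is_derive_eq; first exact: is_deriveM (h a) (IH ur).
rewrite big_cons big_cons eqxx /=.
have -> : \prod_(k <- r | k != a) f k x = \prod_(k <- r) f k x.
  rewrite big_seq_cond [RHS]big_seq; apply: eq_bigl => k.
  case kr: (k \in r) => //=; apply/eqP => ka; by rewrite -ka kr in anr.
have -> : \sum_(i <- r) f' i * \prod_(k <- a :: r | k != i) f k x =
          \sum_(i <- r) f a x * (f' i * \prod_(k <- r | k != i) f k x).
  rewrite big_seq [RHS]big_seq; apply: eq_bigr => i ir.
  rewrite big_cons; have -> : (a != i) by apply/eqP => ai; rewrite ai ir in anr.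
  by rewrite mulrCA.
by rewrite -mulr_sumr addrC [f' a * _]mulrC.
Qed.

Definition mxder m p (F : R -> 'M[R]_(m, p)) (x : R) (F' : 'M[R]_(m, p)) :=
  forall i j, is_derive x 1 (fun u => F u i j) (F' i j).
Arguments mxder {m p}.

Lemma mxder_cst m p (M : 'M[R]_(m, p)) (x : R) : mxder (fun _ => M) x 0.
Proof. move=> i j; rewrite mxE; exact: is_derive_cst. Qed.

Lemma mxder_mul m p q (F : R -> 'M[R]_(m, p)) (G : R -> 'M[R]_(p, q)) F' G' (x : R) :
  mxder F x F' -> mxder G x G' ->
  mxder (fun u => F u *m G u) x (F' *m G x + F x *m G').
Proof.
move=> hF hG i j.
apply: (@is_derive_ext (fun u => \sum_(k <- index_enum 'I_p) F u i k * G u k j)).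
  by move=> u; rewrite mxE.
apply: is_derive_eq.
  apply: (@is_derive_bigsum _ _ (fun k u => F u i k * G u k j)
     (fun k => F x i k *: G' k j + G x k j *: F' i k)) => k.
  have := @is_deriveM _ _ (fun u => F u i k) (fun u => G u k j) x 1 _ _ (hF i k) (hG k j).
  by [].
rewrite !mxE -big_split /=; apply: eq_bigr => k _.
by rewrite addrC; congr (_ + _); exact: mulrC.
Qed.

Lemma is_deriveMc (f : R -> R) (x c d : R) :
  is_derive x 1 f d -> is_derive x 1 (fun u => c * f u) (c * d).
Proof.
move=> h; exact: (is_deriveZ c h).
Qed.

Lemma det_rowrep N (A : 'M[R]_N) (B : 'M[R]_N) i :
  \det (\matrix_(k, l) if k == i then B k l else A k l) =
  \sum_j B i j * cofactor A i j.
Proof.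
rewrite (expand_det_row _ i); apply: eq_bigr => j _.
rewrite mxE eqxx; congr (_ * _).
rewrite /cofactor; congr (_ * \det _); apply/matrixP => k l.
by rewrite !mxE eq_sym (negbTE (neq_lift _ _)).
Qed.

Lemma mxder_det N (F : R -> 'M[R]_N) F' (x : R) : mxder F x F' ->
  is_derive x 1 (fun u => \det (F u))
    (\sum_i \sum_j F' i j * cofactor (F x) i j).
Proof.
move=> hF.
apply: (@is_derive_ext (fun u => \sum_(s : 'S_N) (-1) ^+ s * \prod_i F u i (s i))); first by [].
apply: is_derive_eq.
  refine (@is_derive_bigsum _ _ (fun (s : 'S_N) u => (-1) ^+ s * \prod_i F u i (s i))
    (fun (s : 'S_N) => (-1) ^+ s * \sum_(i <- index_enum 'I_N) F' i (s i) *
                \prod_(k <- index_enum 'I_N | k != i) F x k (s k)) x _) => s.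
  apply: is_deriveMc; apply: (@is_derive_prod _ _ (fun k u => F u k (s k))).
    exact: index_enum_uniq.
  by move=> k; apply: hF.
under [RHS]eq_bigr => i _ do rewrite -det_rowrep.
rewrite [RHS](eq_bigr (fun i => \sum_(s : 'S_N) (-1) ^+ s *
     (F' i (s i) * \prod_(k | k != i) F x k (s k)))); last first.
  move=> i _; apply: eq_bigr => s _; congr (_ * _).
  rewrite (bigD1 i) //= mxE eqxx; congr (_ * _); apply: eq_bigr => k ki.
  by rewrite mxE (negbTE ki).
rewrite exchange_big /=; apply: eq_bigr => s _; by rewrite mulr_sumr.
Qed.

Lemma is_derive_uniq (f : R -> R) (x d1 d2 : R) :
  is_derive x 1 f d1 -> is_derive x 1 f d2 -> d1 = d2.
Proof. by move=> h1 h2; rewrite -(@derive_val _ _ _ _ _ _ _ h1) (@derive_val _ _ _ _ _ _ _ h2). Qed.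

Lemma mxder_uniq m p (F : R -> 'M[R]_(m, p)) (x : R) F1 F2 :
  mxder F x F1 -> mxder F x F2 -> F1 = F2.
Proof. move=> h1 h2; apply/matrixP => i j; exact: is_derive_uniq (h1 i j) (h2 i j). Qed.

Lemma mxder_inv N (F : R -> 'M[R]_N) F' (x : R) :
  (forall u, F u \in unitmx) -> mxder F x F' ->
  mxder (fun u => invmx (F u)) x (- (invmx (F x) *m F' *m invmx (F x))).
Proof.
move=> hU hF.
have dx : \det (F x) != 0 by rewrite -unitfE -unitmxE.
have hd : forall i j, derivable (fun u => invmx (F u) i j) x 1.
  move=> i j.
  have -> : (fun u => invmx (F u) i j) =
     (fun u => (\det (F u))^-1 * ((-1) ^+ (j + i) * \det (row' j (col' i (F u))))).
    by apply/funext => u; rewrite /invmx hU !mxE.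
  have h1 := @mxder_det _ _ _ _ hF.
  have h2 : mxder (fun u => row' j (col' i (F u))) x (row' j (col' i F')).
    by move=> k l; rewrite mxE; apply: (@is_derive_ext (fun u => F u (lift j k) (lift i l))) => [u|]; rewrite ?mxE //; apply: hF.
  have h3 := @mxder_det _ _ _ _ h2.
  have h4 := @is_deriveMc _ _ ((-1) ^+ (j + i)) _ h3.
  have h5 := is_deriveV dx h1.
  have h6 := is_deriveM h5 h4.
  by case: h6.
pose Gm := \matrix_(i, j) 'D_1 (fun u => invmx (F u) i j) x.
have hG : mxder (fun u => invmx (F u)) x Gm.
  by move=> i j; rewrite mxE; apply: derivableP.
have hP := @mxder_mul _ _ _ _ _ _ _ _ hF hG.
have hC : mxder (fun u => F u *m invmx (F u)) x 0.
  move=> i j; apply: (@is_derive_ext (cst ((1%:M : 'M[R]_N) i j))).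
    by move=> u; rewrite mulmxV.
  rewrite !mxE; exact: is_derive_cst.
have e := @mxder_uniq _ _ _ _ _ _ hP hC.
have eG : Gm = - (invmx (F x) *m F' *m invmx (F x)).
  have : invmx (F x) *m (F' *m invmx (F x) + F x *m Gm) = 0 by rewrite e mulmx0.
  rewrite mulmxDr mulmxA (mulmxA _ (F x)) mulVmx // mul1mx => /eqP.
  by rewrite addrC addr_eq0 => /eqP ->.
by rewrite -eG.
Qed.

Lemma is_deriveD' (f g : R -> R) (x a b : R) :
  is_derive x 1 f a -> is_derive x 1 g b -> is_derive x 1 (fun u => f u + g u) (a + b).
Proof. move=> h1 h2; exact: (is_deriveD h1 h2). Qed.

Lemma is_derive_linear (x c k : R) : is_derive x 1 (fun u => c + u * k) k.
Proof.
have h1 : is_derive x 1 (fun u => u * k) k.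
  have := @is_deriveMc id x k 1 (is_derive_id _ _); rewrite mulr1 => h.
  exact: (@is_derive_ext (fun u => k * u)) (fun u => mulrC _ _) h.
have := @is_deriveD' _ _ _ _ _ (is_derive_cst c x 1) h1.
by rewrite add0r.
Qed.

Lemma pd_det_pos N (K : 'M[R]_N) (s : R) : 0 < s ->
  (forall v : 'rV_N, 0 <= (v *m K *m v^T) 0 0) -> 0 < \det (s *: 1%:M + K).
Proof.
move=> s0 hK.
pose f := fun y : R => \det (s *: 1%:M + y *: K).
have nz : forall y, 0 <= y -> f y != 0.
  move=> y y0; rewrite /f -unitfE -unitmxE; apply: pd_unit => // v.
  by rewrite -scalemxAr -scalemxAl mxE mulr_ge0.
have der : forall y : R, derivable f y 1.
  move=> y.
  have h : mxder (fun u : R => s *: 1%:M + u *: K) y K.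
    move=> i j; apply: (@is_derive_ext (fun u => s * (1%:M : 'M[R]_N) i j + u * K i j)).
      by move=> u; rewrite !mxE.
    exact: is_derive_linear.
  by case: (@mxder_det _ _ _ _ h).
have f0 : 0 < f 0.
  by rewrite /f scale0r addr0 scalemx1 det_scalar exprn_gt0.
rewrite -[K]scale1r; rewrite -/(f 1).
rewrite ltNge; apply/negP => f1.
have cont : {within `[0, 1], continuous f}.
  by apply: derivable_within_continuous => y _; exact: der.
have hv : Num.min (f 0) (f 1) <= 0 <= Num.max (f 0) (f 1).
  rewrite ge_min le_max; apply/andP; split; apply/orP; [right | left] => //; exact: ltW.
have [c] := @IVT R f 0 1 0 ler01 cont hv.
rewrite in_itv /= => /andP [c0 _] fc.
by move: (nz c c0); rewrite fc eqxx.
Qed.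

Lemma is_deriveB' (f g : R -> R) (x a b : R) :
  is_derive x 1 f a -> is_derive x 1 g b -> is_derive x 1 (fun u => f u - g u) (a - b).
Proof. move=> h1 h2; exact: (is_deriveB h1 h2). Qed.

Lemma derive_Aentry (d c : R) (x : R) :
  is_derive x 1 (fun u => c * expR (- (d / expR u)))
    (c * expR (- (d / expR x)) * (d / expR x)).
Proof.
have e0 : expR x != 0 by rewrite gt_eqF // expR_gt0.
have hg : is_derive x 1 (fun u => - (d / expR u)) (d / expR x).
  have h1 := @is_deriveV _ expR x (expR x) 1 e0 (is_derive_expR x).
  have h2 := @is_deriveMc _ x (- d) _ h1.
  apply: (is_derive_eq (@is_derive_ext _ _ _ _ _ h2)).
    by move=> u; rewrite mulNr mulrC.
  rewrite /GRing.scale /=; field; exact: e0.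
have h3 := @is_derive1_comp _ expR (fun u => - (d / expR u)) x _ _ (is_derive_expR _) hg.
have h4 := @is_deriveMc _ x c _ h3.
apply: (is_derive_eq h4); by rewrite mulrA.
Qed.

Lemma mxder_Chat n D (t : 'I_D -> R) th1 th2 th3 :
  mxder (fun u => Chat n t u th2 th3) th1
    (kron (Jmx n) (hadamard (Amx t th1 th2) (Smx t th1))).
Proof.
move=> i j; case: (mxtens_indexP i) => a r; case: (mxtens_indexP j) => b s.
set d := (t r - t s) ^+ 2.
set e := (1%:M : 'M[R]_(n * D)) (mxtens_index (a, r)) (mxtens_index (b, s)).
apply: (@is_derive_ext (fun u => ssq th3 * e + 1 * (asq th2 * expR (- (d / expR u))))).
  by move=> u; rewrite /Chat mxE kronE !mxE /len /e /d mxE.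
have h := @is_deriveD' _ _ th1 _ _ (is_derive_cst (ssq th3 * e) th1 1)
   (@is_deriveMc _ th1 1 _ (derive_Aentry d (asq th2) th1)).
apply: (is_derive_eq h); by rewrite kronE !mxE add0r /len mulrA.
Qed.

Lemma hadAS_sym D (t : 'I_D -> R) th1 th2 i j :
  hadamard (Amx t th1 th2) (Smx t th1) i j = hadamard (Amx t th1 th2) (Smx t th1) j i.
Proof.
by rewrite !mxE -[t j - t i]opprB sqrrN.
Qed.

Lemma ZA_eq D (A Z : 'M[R]_D) (c : R) : c != 0 ->
  Z *m (1%:M + c *: A) = 1%:M -> Z *m A = c^-1 *: (1%:M - Z).
Proof.
move=> c0 hZ.
have h : c *: (Z *m A) = 1%:M - Z.
  by rewrite -hZ mulmxDr mulmx1 -scalemxAr addrAC subrr add0r.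
by rewrite -h scalerA mulVf // scale1r.
Qed.

Lemma inv_formula n D (A Z : 'M[R]_D) (s2 : R) : 0 < s2 -> (0 < n)%N ->
  Z *m (1%:M + (s2^-1 * n%:R) *: A) = 1%:M ->
  (kron 1%:M (s2^-1 *: 1%:M) + kron (Jmx n) (- (s2^-1 * n%:R^-1) *: (1%:M - Z)))
    *m (s2 *: 1%:M + kron (Jmx n) A) = 1%:M.
Proof.
move=> s0 n0 hZ.
have s2n : s2 != 0 by rewrite gt_eqF.
have nn : n%:R != 0 :> R by rewrite pnatr_eq0 -lt0n.
have ZA := @ZA_eq _ _ _ _ (mulf_neq0 (invr_neq0 s2n) nn) hZ.
have -> : (s2 *: 1%:M : 'M[R]_(n * D)) = kron 1%:M (s2 *: 1%:M) by rewrite kronZr kron11.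
rewrite kron_form.
have -> : s2^-1 *: 1%:M *m (s2 *: 1%:M) = 1%:M :> 'M[R]_D.
  by rewrite -scalemxAl mul1mx scalerA mulVf // scale1r.
have -> : s2^-1 *: 1%:M *m A + - (s2^-1 * n%:R^-1) *: (1%:M - Z) *m (s2 *: 1%:M) +
    n%:R *: (- (s2^-1 * n%:R^-1) *: (1%:M - Z) *m A) = 0.
  rewrite -!scalemxAl mul1mx -scalemxAr mulmx1 mulmxBl mul1mx ZA.
  apply/matrixP => i j; rewrite !mxE; field.
  by rewrite s2n nn.
by rewrite kron0r addr0 kron11.
Qed.

Lemma GCG n D (B Z : 'M[R]_D) (s2 : R) : 0 < s2 -> (0 < n)%N ->
  let G := kron 1%:M (s2^-1 *: 1%:M) + kron (Jmx n) (- (s2^-1 * n%:R^-1) *: (1%:M - Z)) in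
  G *m kron (Jmx n) B = kron (Jmx n) (s2^-1 *: (Z *m B)) /\
  G *m kron (Jmx n) B *m G = (s2 ^+ 2)^-1 *: kron (Jmx n) (Z *m B *m Z).
Proof.
move=> s0 n0 G.
have s2n : s2 != 0 by rewrite gt_eqF.
have nn : n%:R != 0 :> R by rewrite pnatr_eq0 -lt0n.
have e1 : G *m kron (Jmx n) B = kron (Jmx n) (s2^-1 *: (Z *m B)).
  rewrite -[kron (Jmx n) B]add0r -(@kron0r n n D D 1%:M) kron_form.
  rewrite mulmx0 kron0r add0r mulmx0 addr0 -!scalemxAl mul1mx mulmxBl mul1mx.
  set ZB := Z *m B; congr kron; apply/matrixP => i j; rewrite !mxE; field.
  by rewrite s2n nn.
split => //; rewrite e1.
rewrite -[kron (Jmx n) (s2^-1 *: (Z *m B))]add0r -(@kron0r n n D D 1%:M) kron_form.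
rewrite mul0mx kron0r add0r mul0mx add0r -!scalemxAr mulmx1 mulmxBr mulmx1.
rewrite -!scalemxAl -kronZr.
set ZB := Z *m B; set ZBZ := ZB *m Z.
congr kron; apply/matrixP => i j; rewrite !mxE; field.
by rewrite s2n nn.
Qed.

Lemma trace_part n D (B Z : 'M[R]_D) (s2 : R) : (forall i j, B i j = B j i) ->
  \tr (kron (Jmx n) (s2^-1 *: (Z *m B))) =
  s2^-1 * n%:R * (\sum_(i < D) B i i)
  - s2^-1 * n%:R * (\sum_(i < D) \sum_(j < D) hadamard (1%:M - Z) B i j).
Proof.
move=> Bs.
rewrite tr_kron mxtraceZ.
have -> : \tr (Jmx n) = n%:R :> R.
  by rewrite /mxtrace; under eq_bigr do rewrite mxE; rewrite sumr_const card_ord.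
have -> : \sum_(i < D) \sum_(j < D) hadamard (1%:M - Z) B i j =
   \sum_(i < D) B i i - \sum_(i < D) \sum_(j < D) Z i j * B i j.
  rewrite -sumrB; apply: eq_bigr => i _.
  under eq_bigr do rewrite !mxE mulrBl.
  rewrite sumrB; congr (_ - _).
  rewrite (bigD1 i) //= eqxx mul1r big1 ?addr0 // => j ji.
  by rewrite eq_sym (negbTE ji) mul0r.
have -> : \tr (Z *m B) = \sum_(i < D) \sum_(j < D) Z i j * B i j.
  by rewrite /mxtrace; apply: eq_bigr => i _; rewrite mxE; apply: eq_bigr => j _; rewrite Bs.
ring.
Qed.

Lemma jacobi_tr N (C C' : 'M[R]_N) : C \in unitmx ->
  (\det C)^-1 * (\sum_i \sum_j C' i j * cofactor C i j) = \tr (invmx C *m C').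
Proof.
move=> hC; rewrite /invmx hC -scalemxAl mxtraceZ; congr (_ * _).
rewrite /mxtrace exchange_big /=; apply: eq_bigr => i _.
rewrite mxE; apply: eq_bigr => j _; by rewrite !mxE mulrC.
Qed.

End Aux.
Arguments inv_formula {R n D A Z s2}.
Arguments mxder {R m p}.
Arguments mxder_inv {R N F F' x}.
Arguments mxder_mul {R m p q F G F' G' x}.
Arguments mxder_cst {R m p}.
Arguments mxder_det {R N F F' x}.
Arguments is_deriveB' {R f g x a b}.
Arguments jacobi_tr {R N C C'}.

Theorem proposition1 (R : realType) (D n : nat) (hD : (0 < D)%N) (hn : (0 < n)%N)
  (t : 'I_D -> R)
  (ht : exists (t0 h : R), forall r : 'I_D, t r = t0 + (nat_of_ord r)%:R * h)
  (th1 th2 th3 : R) (X : 'cV[R]_(n * D)) :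
  let A := Amx t th1 th2 in
  let S := Smx t th1 in
  let C := Chat n t th1 th2 th3 in
  let Z := Zmx n t th1 th2 th3 in
  let s2 := ssq th3 in
  let trterm := \tr (invmx C *m dChat n t th1 th2 th3) in
  is_derive th1 1 (fun u => logp n t u th2 th3 X)
    ((1/2) * (X^T *m ((s2 ^+ 2)^-1 *: kron (Jmx n) (Z *m hadamard A S *m Z)) *m X) 0 0
     - (1/2) * trterm)
  /\ trterm =
     s2^-1 * n%:R * (\sum_(i < D) hadamard A S i i)
     - s2^-1 * n%:R * (\sum_(i < D) \sum_(j < D) hadamard (1%:M - Z) (hadamard A S) i j).
Proof.
move=> A S C Z s2 trterm.
have s0 : 0 < s2 by rewrite /s2 /ssq expR_gt0.
have Cdef : forall u, Chat n t u th2 th3 = s2 *: 1%:M + kron (Jmx n) (Amx t u th2) by [].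
have CU : forall u, Chat n t u th2 th3 \in unitmx.
  by move=> u; rewrite Cdef; apply: pd_unit => //; apply: kron_psd; apply: A_psd.
have Cpos : 0 < \det C.
  by rewrite /C Cdef; apply: pd_det_pos => //; apply: kron_psd; apply: A_psd.
have MU : (1%:M + (s2^-1 * n%:R) *: A) \in unitmx.
  rewrite -[X in X + _]scale1r; apply: pd_unit; first exact: ltr01.
  move=> v; rewrite -scalemxAr -scalemxAl mxE; apply: mulr_ge0; last exact: A_psd.
  by apply: mulr_ge0; [rewrite invr_ge0 ltW | exact: ler0n].
have hZ : Z *m (1%:M + (s2^-1 * n%:R) *: A) = 1%:M by rewrite /Z /Zmx mulVmx.
set G := kron 1%:M (s2^-1 *: 1%:M) + kron (Jmx n) (- (s2^-1 * n%:R^-1) *: (1%:M - Z)).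
have invC : invmx C = G.
  have e := inv_formula s0 hn hZ; change (G *m C = 1%:M) in e.
  by rewrite -[invmx C]mul1mx -e -mulmxA (mulmxV (CU th1)) mulmx1.
set B := hadamard A S.
have dC : mxder (fun u => Chat n t u th2 th3) th1 (kron (Jmx n) B) := @mxder_Chat R n D t th1 th2 th3.
have dCeq : dChat n t th1 th2 th3 = kron (Jmx n) B.
  apply/matrixP => i j; rewrite mxE derive1E; exact: (@derive_val _ _ _ _ _ _ _ (dC i j)).
move: (@GCG R n D B Z s2 s0 hn) => /= [GC GCGe].
have trE : trterm = \tr (kron (Jmx n) (s2^-1 *: (Z *m B))).
  by rewrite /trterm dCeq invC GC.
split; last first.
  rewrite trE trace_part // => i j; exact: hadAS_sym.
rewrite trE.
have dInv := mxder_inv CU dC.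
have dQ := mxder_mul (mxder_mul (mxder_cst X^T th1) dInv) (mxder_cst X th1).
have hq := dQ 0 0.
have hl := @is_derive1_comp _ (@ln R) (fun u => \det (Chat n t u th2 th3)) th1 _ _
   (is_derive1_ln Cpos) (mxder_det dC).
have h1 := @is_deriveMc _ _ th1 (- (1/2)) _ hq.
have h2 := @is_deriveMc _ _ th1 (1/2) _ hl.
have h3 := is_deriveB' h1 h2.
have h4 := is_deriveB' h3 (is_derive_cst (((n * D)%:R / 2) * ln (2 * pi)) th1 1).
apply: (is_derive_eq h4).
rewrite jacobi_tr //.
have invC' : invmx (Chat n t th1 th2 th3) = G := invC.
rewrite invC' GCGe GC mul0mx add0r mulmx0 addr0 subr0 mulmxN mulNmx mxE.
ring.
exact: CU.
Qed.
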